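(* Let $H_1$ and $H_2$ be reduced valuation monoids such that their quotient groups $\mathsf{q}(H_1)$ and $\mathsf{q}(H_2)$ are isomorphic. Then the reduced finitary power monoids $\mathcal{P}_{\mathrm{fin},1}(H_1)$ and $\mathcal{P}_{\mathrm{fin},1}(H_2)$ are isomorphic.
   Context: All monoids are written multiplicatively. A commutative monoid $H$ is cancellative if $ac=bc$ implies $a=b$ for all $a,b,c\in H$. For a commutative cancellative monoid $H$, $\mathsf{q}(H)$ denotes its quotient (Grothendieck) group, with $H\subseteq \mathsf{q}(H)$ and $\mathsf{q}(H)=\{ab^{-1}: a,b\in H\}$. A commutative cancellative monoid $H$ is a valuation monoid if for every $x\in\mathsf{q}(H)$ we have $x\in H$ or $x^{-1}\in H$; it is reduced if its only invertible element is the identity $1$. For a monoid $H$ with identity $1$, $\mathcal{P}_{\mathrm{fin},1}(H)$ is the set of all finite subsets of $H$ containing $1$, which is a monoid under setwise multiplication $(X,Y)\mapsto\{xy: x\in X, y\in Y\}$ with identity $\{1\}$. *)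

(* Defs.v *)
From Stdlib Require Import List.

Record cmonoid := CMonoid {
  mcar :> Type;
  mmul : mcar -> mcar -> mcar;
  mone : mcar;
  mmulA : forall a b c, mmul a (mmul b c) = mmul (mmul a b) c;
  mmulC : forall a b, mmul a b = mmul b a;
  mmul1 : forall a, mmul mone a = a
}.
Arguments mmul {c0} _ _.
Arguments mone {c0}.

Record cgroup := CGroup {
  gcar :> Type;
  gmul : gcar -> gcar -> gcar;
  gone : gcar;
  ginv : gcar -> gcar;
  gmulA : forall a b c, gmul a (gmul b c) = gmul (gmul a b) c;
  gmulC : forall a b, gmul a b = gmul b a;
  gmul1 : forall a, gmul gone a = a;
  gmulV : forall a, gmul (ginv a) a = gone
}.
Arguments gmul {c0} _ _.
Arguments gone {c0}.
Arguments ginv {c0} _.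

Definition cancellative (H : cmonoid) : Prop :=
  forall a b c : H, mmul a c = mmul b c -> a = b.

Definition reduced (H : cmonoid) : Prop :=
  forall u : H, (exists v : H, mmul u v = mone) -> u = mone.

Definition is_quotient_group (H : cmonoid) (G : cgroup) (f : H -> G) : Prop :=
  (forall a b, f a = f b -> a = b) /\
  f mone = gone /\
  (forall a b, f (mmul a b) = gmul (f a) (f b)) /\
  (forall x : G, exists a b : H, x = gmul (f a) (ginv (f b))).

Definition valuation_monoid (H : cmonoid) : Prop :=
  cancellative H /\
  exists (G : cgroup) (f : H -> G), is_quotient_group H G f /\
    forall x : G, (exists a, f a = x) \/ (exists a, f a = ginv x).

Definition group_iso (G1 G2 : cgroup) : Prop :=
  exists phi : G1 -> G2,
    (forall x y, phi x = phi y -> x = y) /\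
    (forall y, exists x, phi x = y) /\
    (forall x y, phi (gmul x y) = gmul (phi x) (phi y)).

Definition finite_subset {T : Type} (X : T -> Prop) : Prop :=
  exists l : list T, forall x, X x -> In x l.

Definition Pfin1 (H : cmonoid) (X : H -> Prop) : Prop :=
  finite_subset X /\ X mone.

Definition setmul {H : cmonoid} (X Y : H -> Prop) : H -> Prop :=
  fun z => exists x y, X x /\ Y y /\ z = mmul x y.

Definition set1 {H : cmonoid} : H -> Prop := fun z => z = mone.

Definition Pfin1_iso (H1 H2 : cmonoid) : Prop :=
  exists Phi : (H1 -> Prop) -> (H2 -> Prop),
    (forall X, Pfin1 H1 X -> Pfin1 H2 (Phi X)) /\
    (forall X Y, Pfin1 H1 X -> Pfin1 H1 Y -> Phi X = Phi Y -> X = Y) /\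
    (forall Y, Pfin1 H2 Y -> exists X, Pfin1 H1 X /\ Phi X = Y) /\
    Phi set1 = set1 /\
    (forall X Y, Pfin1 H1 X -> Pfin1 H1 Y -> Phi (setmul X Y) = setmul (Phi X) (Phi Y)).

(* Main.v *)
Require Import Defs.
From Stdlib Require Import List Classical FunctionalExtensionality PropExtensionality.

Lemma gmul1r (G : cgroup) (a : G) : gmul a gone = a.
Proof. rewrite gmulC; apply gmul1. Qed.
Lemma gmulVr (G : cgroup) (a : G) : gmul a (ginv a) = gone.
Proof. rewrite gmulC; apply gmulV. Qed.
Lemma gcanc (G : cgroup) (c a b : G) : gmul c a = gmul c b -> a = b.
Proof.
  intros H.
  assert (E: gmul (ginv c) (gmul c a) = gmul (ginv c) (gmul c b)) by (rewrite H; reflexivity).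
  rewrite !gmulA, gmulV, !gmul1 in E. exact E.
Qed.
Lemma ginv_uniq (G : cgroup) (a b : G) : gmul a b = gone -> b = ginv a.
Proof. intros H. apply (gcanc _ a). rewrite H, gmulVr. reflexivity. Qed.
Lemma ginvK (G : cgroup) (a : G) : ginv (ginv a) = a.
Proof. symmetry; apply ginv_uniq; apply gmulV. Qed.
Lemma g4 (G : cgroup) (a b c d : G) :
  gmul (gmul a b) (gmul c d) = gmul (gmul a c) (gmul b d).
Proof. rewrite !gmulA. rewrite <- (gmulA _ a b c), (gmulC _ b c), gmulA. reflexivity. Qed.
Lemma ginvM (G : cgroup) (a b : G) : ginv (gmul a b) = gmul (ginv a) (ginv b).
Proof. symmetry; apply ginv_uniq. rewrite g4, !gmulVr, gmul1. reflexivity. Qed.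
Lemma ginv1 (G : cgroup) : ginv (@gone G) = gone.
Proof. symmetry; apply ginv_uniq; apply gmul1. Qed.
Lemma div1 (G : cgroup) (a b : G) : gmul a (ginv b) = gone -> a = b.
Proof. intros H. apply ginv_uniq in H. rewrite <- (ginvK _ a), <- H, ginvK. reflexivity. Qed.

Lemma pext {A : Type} (X Y : A -> Prop) : (forall z, X z <-> Y z) -> X = Y.
Proof.
  intros H. apply functional_extensionality; intros z.
  apply propositional_extensionality; apply H.
Qed.

Record Ctx {H : cmonoid} {G : cgroup} (f : H -> G) : Prop := {
  c_inj : forall a b, f a = f b -> a = b;
  c_one : f mone = gone;
  c_mul : forall a b, f (mmul a b) = gmul (f a) (f b);
  c_red : reduced H;
  c_val : forall x : G, (exists a, f a = x) \/ (exists a, f a = ginv x) }.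

Lemma mk_ctx (H : cmonoid) (G : cgroup) (f : H -> G) :
  valuation_monoid H -> reduced H -> is_quotient_group H G f -> Ctx f.
Proof.
  intros [_ [G0 [f0 [[i0 [o0 [m0 s0]]] v0]]]] red [i [o [m s]]].
  constructor; auto.
  intros x. destruct (s x) as [a [b ->]].
  destruct (v0 (gmul (f0 a) (ginv (f0 b)))) as [[c Hc]|[c Hc]].
  - left. exists c.
    assert (E : mmul c b = a).
    { apply i0. rewrite m0, Hc, <- gmulA, gmulV, gmul1r. reflexivity. }
    rewrite <- E, m, <- gmulA, gmulVr, gmul1r. reflexivity.
  - right. exists c.
    assert (E : mmul c a = b).
    { apply i0. rewrite m0, Hc, ginvM, ginvK, (gmulC _ (ginv (f0 a))), <- gmulA, gmulV, gmul1r.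
      reflexivity. }
    rewrite ginvM, ginvK, <- E, m, (gmulC _ (f c) (f a)), gmulA, gmulV, gmul1. reflexivity.
Qed.

Definition Good {H : cmonoid} {G : cgroup} (f : H -> G) (g : G) (S : G -> Prop) : Prop :=
  (forall s, S s -> exists y, f y = gmul g s) /\ (exists s, S s /\ gmul g s = gone).
Definition Norm {H : cmonoid} {G : cgroup} (f : H -> G) (S : G -> Prop) : H -> Prop :=
  fun y => exists g, Good f g S /\ exists s, S s /\ f y = gmul g s.
Definition tr {G : cgroup} (h : G) (S : G -> Prop) : G -> Prop :=
  fun z => exists s, S s /\ z = gmul h s.
Definition smul {G : cgroup} (S T : G -> Prop) : G -> Prop :=
  fun z => exists s t, S s /\ T t /\ z = gmul s t.
Definition img {A B : Type} (F : A -> B) (X : A -> Prop) : B -> Prop :=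
  fun z => exists x, X x /\ z = F x.
Definition fin {A : Type} (S : A -> Prop) := exists l, forall s, S s -> In s l.

Lemma fin_inj {A B : Type} (F : A -> B) (Finj : forall a b, F a = F b -> a = b)
  (L : list B) : forall (Y : A -> Prop), (forall y, Y y -> In (F y) L) -> finite_subset Y.
Proof.
  induction L as [|b L IH]; intros Y HY.
  - exists nil. intros y Hy. destruct (HY y Hy).
  - destruct (classic (exists y0, Y y0 /\ F y0 = b)) as [[y0 [Y0 E0]]|N].
    + destruct (IH (fun y => Y y /\ F y <> b)) as [l Hl].
      { intros y [Hy Hn]. destruct (HY y Hy) as [E|E]; [congruence|exact E]. }
      exists (y0 :: l). intros y Hy.
      destruct (classic (F y = b)) as [E|E].
      * left. apply Finj. congruence.
      * right. apply Hl. auto.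
    + apply IH. intros y Hy. destruct (HY y Hy) as [E|E]; auto.
      exfalso; apply N; eauto.
Qed.


Lemma in_both {H : cmonoid} {G : cgroup} {f : H -> G} (C : Ctx f) (x : G) :
  (exists y, f y = x) -> (exists y, f y = ginv x) -> x = gone.
Proof.
  intros [y1 E1] [y2 E2].
  assert (U : y2 = mone).
  { apply (c_red _ C). exists y1. apply (c_inj _ C).
    rewrite (c_mul _ C), E1, E2, gmulV, (c_one _ C). reflexivity. }
  subst y2. rewrite (c_one _ C) in E2.
  rewrite <- (ginvK _ x), <- E2, ginv1. reflexivity.
Qed.

Lemma good_uniq {H : cmonoid} {G : cgroup} {f : H -> G} (C : Ctx f) g g' S :
  Good f g S -> Good f g' S -> g = g'.
Proof.
  intros [A1 [s [Ss Es]]] [A2 [s' [Ss' Es']]].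
  apply ginv_uniq in Es. apply ginv_uniq in Es'. subst s s'.
  apply div1. apply (in_both C).
  - apply A1; exact Ss'.
  - rewrite ginvM, ginvK, gmulC. apply A2; exact Ss.
Qed.

Definition le {H : cmonoid} {G : cgroup} (f : H -> G) (a b : G) :=
  exists y, f y = gmul (ginv a) b.

Lemma le_total {H : cmonoid} {G : cgroup} {f : H -> G} (C : Ctx f) a b :
  le f a b \/ le f b a.
Proof.
  destruct (c_val _ C (gmul (ginv a) b)) as [[y E]|[y E]].
  - left; exists y; exact E.
  - right; exists y. rewrite E, ginvM, ginvK, gmulC. reflexivity.
Qed.

Lemma le_trans {H : cmonoid} {G : cgroup} {f : H -> G} (C : Ctx f) a b c :
  le f a b -> le f b c -> le f a c.
Proof.
  intros [y1 E1] [y2 E2]. exists (mmul y1 y2).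
  rewrite (c_mul _ C), E1, E2, <- gmulA, (gmulA _ b), gmulVr, gmul1. reflexivity.
Qed.

Lemma le_refl {H : cmonoid} {G : cgroup} {f : H -> G} (C : Ctx f) a : le f a a.
Proof. exists mone. rewrite (c_one _ C), gmulV. reflexivity. Qed.

Lemma min_exists {H : cmonoid} {G : cgroup} {f : H -> G} (C : Ctx f) (l : list G) :
  forall S : G -> Prop, (exists s, S s) -> (forall s, S s -> In s l) ->
  exists m, S m /\ forall s, S s -> le f m s.
Proof.
  induction l as [|a l IH]; intros S [s0 S0] HS.
  - destruct (HS s0 S0).
  - destruct (classic (exists s, S s /\ s <> a)) as [Ex|N].
    + destruct (IH (fun s => S s /\ s <> a)) as [m [[Sm _] Hm]].
      { exact Ex. }
      { intros s [Ss Ns]. destruct (HS s Ss) as [E|E]; [congruence|exact E]. }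
      assert (Hm' : forall s, S s -> s <> a -> le f m s) by (intros; apply Hm; auto).
      destruct (classic (S a)) as [Sa|Na].
      * destruct (le_total C a m) as [L|L].
        -- exists a. split; [exact Sa|]. intros s Ss.
           destruct (classic (s = a)) as [->|Ne]; [apply (le_refl C)|].
           apply (le_trans C _ m); auto.
        -- exists m. split; [exact Sm|]. intros s Ss.
           destruct (classic (s = a)) as [->|Ne]; auto.
      * exists m. split; [exact Sm|]. intros s Ss.
        apply Hm'; auto. intros ->; contradiction.
    + exists s0. split; [exact S0|]. intros s Ss.
      assert (s = a) by (apply NNPP; intros Ne; apply N; eauto).
      assert (s0 = a) by (apply NNPP; intros Ne; apply N; eauto).
      subst. apply (le_refl C).
Qed.

Lemma good_exists {H : cmonoid} {G : cgroup} {f : H -> G} (C : Ctx f) (S : G -> Prop) :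
  fin S -> (exists s, S s) -> exists g, Good f g S.
Proof.
  intros [l Hl] Ne. destruct (min_exists C l S Ne Hl) as [m [Sm Hm]].
  exists (ginv m). split.
  - intros s Ss. apply Hm; exact Ss.
  - exists m. split; [exact Sm|apply gmulV].
Qed.

Lemma norm_iff {H : cmonoid} {G : cgroup} {f : H -> G} (C : Ctx f) g S y :
  Good f g S -> (Norm f S y <-> exists s, S s /\ f y = gmul g s).
Proof.
  intros Gd. split.
  - intros [g' [Gd' R]]. rewrite (good_uniq C g g' S Gd Gd'). exact R.
  - intros R. exists g. auto.
Qed.

Lemma norm_pfin {H : cmonoid} {G : cgroup} {f : H -> G} (C : Ctx f) g S :
  fin S -> Good f g S -> Pfin1 H (Norm f S).
Proof.
  intros [l Hl] Gd. split.
  - apply (fin_inj f (c_inj _ C) (map (gmul g) l)).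
    intros y Ny. apply (norm_iff C g S y Gd) in Ny. destruct Ny as [s [Ss ->]].
    apply in_map. apply Hl; exact Ss.
  - apply (norm_iff C g S mone Gd). destruct Gd as [_ [s [Ss Es]]].
    exists s. rewrite (c_one _ C). auto.
Qed.

Lemma good_tr {H : cmonoid} {G : cgroup} {f : H -> G} (C : Ctx f) g h S :
  Good f g S -> Good f (gmul g (ginv h)) (tr h S).
Proof.
  intros [A [s0 [S0 E0]]]. split.
  - intros z [s [Ss ->]]. rewrite <- gmulA, (gmulA _ (ginv h)), gmulV, gmul1. auto.
  - exists (gmul h s0). split; [exists s0; auto|].
    rewrite <- gmulA, (gmulA _ (ginv h)), gmulV, gmul1. exact E0.
Qed.

Lemma norm_tr {H : cmonoid} {G : cgroup} {f : H -> G} (C : Ctx f) g h S :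
  Good f g S -> Norm f (tr h S) = Norm f S.
Proof.
  intros Gd. apply pext; intros y.
  rewrite (norm_iff C _ _ y (good_tr C g h S Gd)), (norm_iff C g S y Gd).
  split.
  - intros [z [[s [Ss ->]] E]]. exists s. split; [exact Ss|].
    rewrite E, <- gmulA, (gmulA _ (ginv h)), gmulV, gmul1. reflexivity.
  - intros [s [Ss E]]. exists (gmul h s). split; [exists s; auto|].
    rewrite E, <- gmulA, (gmulA _ (ginv h)), gmulV, gmul1. reflexivity.
Qed.

Lemma good_smul {H : cmonoid} {G : cgroup} {f : H -> G} (C : Ctx f) g h S T :
  Good f g S -> Good f h T -> Good f (gmul g h) (smul S T).
Proof.
  intros [A [s0 [S0 E0]]] [B [t0 [T0 F0]]]. split.
  - intros z [s [t [Ss [Tt ->]]]]. destruct (A s Ss) as [y1 E1]. destruct (B t Tt) as [y2 E2].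
    exists (mmul y1 y2). rewrite (c_mul _ C), E1, E2, g4. reflexivity.
  - exists (gmul s0 t0). split; [exists s0, t0; auto|].
    rewrite g4, E0, F0, gmul1. reflexivity.
Qed.

Lemma norm_smul {H : cmonoid} {G : cgroup} {f : H -> G} (C : Ctx f) g h S T :
  Good f g S -> Good f h T -> Norm f (smul S T) = setmul (Norm f S) (Norm f T).
Proof.
  intros GS GT. apply pext; intros y.
  rewrite (norm_iff C _ _ y (good_smul C g h S T GS GT)). split.
  - intros [z [[s [t [Ss [Tt ->]]]] E]].
    destruct (proj1 GS s Ss) as [y1 E1]. destruct (proj1 GT t Tt) as [y2 E2].
    exists y1, y2. split; [|split].
    + apply (norm_iff C g S y1 GS). eauto.
    + apply (norm_iff C h T y2 GT). eauto.
    + apply (c_inj _ C). rewrite (c_mul _ C), E, E1, E2, g4. reflexivity.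
  - intros [y1 [y2 [N1 [N2 ->]]]].
    apply (norm_iff C g S y1 GS) in N1. apply (norm_iff C h T y2 GT) in N2.
    destruct N1 as [s [Ss E1]]. destruct N2 as [t [Tt E2]].
    exists (gmul s t). split; [exists s, t; auto|].
    rewrite (c_mul _ C), E1, E2, g4. reflexivity.
Qed.

Lemma good_img {H : cmonoid} {G : cgroup} {f : H -> G} (C : Ctx f) (X : H -> Prop) :
  X mone -> Good f gone (img f X).
Proof.
  intros X1. split.
  - intros z [x [Xx ->]]. exists x. rewrite gmul1. reflexivity.
  - exists (f mone). split; [exists mone; auto|]. rewrite gmul1, (c_one _ C). reflexivity.
Qed.

Lemma norm_img {H : cmonoid} {G : cgroup} {f : H -> G} (C : Ctx f) (X : H -> Prop) :
  X mone -> Norm f (img f X) = X.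
Proof.
  intros X1. apply pext; intros y.
  rewrite (norm_iff C _ _ y (good_img C X X1)). split.
  - intros [z [[x [Xx ->]] E]]. rewrite gmul1 in E. apply (c_inj _ C) in E. subst; exact Xx.
  - intros Xy. exists (f y). split; [exists y; auto|]. rewrite gmul1. reflexivity.
Qed.

Lemma norm_eq {H : cmonoid} {G : cgroup} {f : H -> G} (C : Ctx f) g g' S S' :
  Good f g S -> Good f g' S' -> Norm f S = Norm f S' ->
  forall z, S z <-> tr (gmul (ginv g) g') S' z.
Proof.
  intros GS GS' E z. split.
  - intros Sz. destruct (proj1 GS z Sz) as [y Ey].
    assert (Ny : Norm f S y) by (apply (norm_iff C g S y GS); eauto).
    rewrite E in Ny. apply (norm_iff C g' S' y GS') in Ny. destruct Ny as [s' [Ss' E']].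
    exists s'. split; [exact Ss'|].
    rewrite <- gmulA, <- E', Ey, gmulA, gmulV, gmul1. reflexivity.
  - intros [s' [Ss' ->]]. destruct (proj1 GS' s' Ss') as [y Ey].
    assert (Ny : Norm f S' y) by (apply (norm_iff C g' S' y GS'); eauto).
    rewrite <- E in Ny. apply (norm_iff C g S y GS) in Ny. destruct Ny as [s [Ss E']].
    rewrite <- gmulA, <- Ey, E', gmulA, gmulV, gmul1. exact Ss.
Qed.

Lemma hom1 (G1 G2 : cgroup) (phi : G1 -> G2) :
  (forall x y, phi (gmul x y) = gmul (phi x) (phi y)) -> phi gone = gone.
Proof.
  intros Pm.
  assert (E: gmul (phi gone) gone = gmul (phi gone) (phi gone))
    by (rewrite gmul1r, <- Pm, gmul1; reflexivity).
  apply gcanc in E. symmetry; exact E.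
Qed.

Lemma img_fin {A B : Type} (F : A -> B) (X : A -> Prop) :
  finite_subset X -> fin (img F X).
Proof.
  intros [l Hl]. exists (map F l). intros z [x [Xx ->]]. apply in_map; auto.
Qed.

Theorem theorem2 (H1 H2 : cmonoid) :
  valuation_monoid H1 -> reduced H1 ->
  valuation_monoid H2 -> reduced H2 ->
  (exists (G1 : cgroup) (f1 : H1 -> G1) (G2 : cgroup) (f2 : H2 -> G2),
      is_quotient_group H1 G1 f1 /\ is_quotient_group H2 G2 f2 /\ group_iso G1 G2) ->
  Pfin1_iso H1 H2.
Proof.
  intros V1 R1 V2 R2 [G1 [f1 [G2 [f2 [q1 [q2 [phi [Pi [Ps Pm]]]]]]]]].
  pose proof (mk_ctx H1 G1 f1 V1 R1 q1) as C1.
  pose proof (mk_ctx H2 G2 f2 V2 R2 q2) as C2.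
  pose proof (hom1 G1 G2 phi Pm) as phi1.
  set (F := fun x => phi (f1 x)).
  assert (GX : forall X, Pfin1 H1 X -> fin (img F X) /\ exists g, Good f2 g (img F X)).
  { intros X [FX X1]. assert (Fi : fin (img F X)) by (apply img_fin; exact FX).
    split; [exact Fi|]. apply (good_exists C2); [exact Fi|]. exists (F mone). exists mone; auto. }
  exists (fun X => Norm f2 (img F X)). split; [|split; [|split; [|split]]].
  - intros X PX. destruct (GX X PX) as [Fi [g Gd]]. exact (norm_pfin C2 g _ Fi Gd).
  - intros X Y PX PY E.
    destruct (GX X PX) as [_ [gX GdX]]. destruct (GX Y PY) as [_ [gY GdY]].
    pose proof (norm_eq C2 gX gY _ _ GdX GdY E) as Eq.
    destruct (Ps (gmul (ginv gX) gY)) as [k Hk].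
    assert (Eq1 : img f1 X = tr k (img f1 Y)).
    { apply pext; intros z. split.
      - intros [x [Xx ->]].
        destruct (proj1 (Eq (F x)) (ex_intro _ x (conj Xx eq_refl))) as [w [[y [Yy ->]] Ew]].
        exists (f1 y). split; [exists y; auto|]. apply Pi. rewrite Pm, Hk. exact Ew.
      - intros [w [[y [Yy ->]] ->]].
        destruct (proj2 (Eq (phi (gmul k (f1 y))))) as [x [Xx Ex]].
        { exists (F y). split; [exists y; auto|]. rewrite Pm, Hk. reflexivity. }
        exists x. split; [exact Xx|]. apply Pi. exact Ex. }
    rewrite <- (norm_img C1 X (proj2 PX)), <- (norm_img C1 Y (proj2 PY)), Eq1.
    apply (norm_tr C1 gone). apply (good_img C1). exact (proj2 PY).
  - intros Y [FY Y1].
    set (S1 := fun z => img f2 Y (phi z)).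
    assert (FS1 : fin S1).
    { destruct FY as [l Hl]. apply (fin_inj phi Pi (map f2 l)).
      intros z [y [Yy E]]. rewrite E. apply in_map; auto. }
    assert (Ne1 : exists s, S1 s).
    { exists gone. exists mone. split; [exact Y1|]. rewrite phi1, (c_one _ C2). reflexivity. }
    destruct (good_exists C1 S1 FS1 Ne1) as [g1 Gd1].
    exists (Norm f1 S1). split; [exact (norm_pfin C1 g1 S1 FS1 Gd1)|].
    assert (Eq : img F (Norm f1 S1) = tr (phi g1) (img f2 Y)).
    { apply pext; intros z. split.
      - intros [x [Nx ->]]. apply (norm_iff C1 g1 S1 x Gd1) in Nx.
        destruct Nx as [s [Ss E]]. exists (phi s). split; [exact Ss|].
        unfold F. rewrite E, Pm. reflexivity.
      - intros [w [Yw ->]]. destruct (Ps w) as [s <-].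
        destruct (proj1 Gd1 s Yw) as [x Ex]. exists x. split.
        + apply (norm_iff C1 g1 S1 x Gd1). exists s; auto.
        + unfold F; rewrite Ex, Pm; reflexivity. }
    rewrite Eq, (norm_tr C2 gone); [apply (norm_img C2 Y Y1)| apply (good_img C2 Y Y1)].
  - assert (E : img F set1 = img f2 set1).
    { apply pext; intros z. split; intros [x [Hx ->]]; unfold set1 in Hx; subst;
        exists mone; (split; [reflexivity|]); unfold F;
        rewrite (c_one _ C1), phi1, (c_one _ C2); reflexivity. }
    rewrite E. apply (norm_img C2). reflexivity.
  - intros X Y PX PY.
    destruct (GX X PX) as [_ [gX GdX]]. destruct (GX Y PY) as [_ [gY GdY]].
    rewrite <- (norm_smul C2 gX gY _ _ GdX GdY). f_equal.
    apply pext; intros z. split.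
    + intros [w [[x [y [Xx [Yy ->]]]] ->]]. exists (F x), (F y).
      split; [exists x; auto|]. split; [exists y; auto|].
      unfold F. rewrite (c_mul _ C1), Pm. reflexivity.
    + intros [s [t [[x [Xx ->]] [[y [Yy ->]] ->]]]].
      exists (mmul x y). split; [exists x, y; auto|].
      unfold F. rewrite (c_mul _ C1), Pm. reflexivity.
Qed.
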